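(* Let $A,B,C,D,E\in\mathbb{C}$ with $E\neq0$, $M=\{(x,y,z)\in\mathbb{C}^3 : x^2+y^2+z^2+Exyz-Ax-By-Cz-D=0\}$, and let $V^x=(2z+Exy-C)\partial_y-(2y+Exz-B)\partial_z$, $V^y=-(2z+Exy-C)\partial_x+(2x+Eyz-A)\partial_z$, $V^z=(2y+Exz-B)\partial_x-(2x+Eyz-A)\partial_y$ (vector fields tangent to $M$). For every entire holomorphic function $f\colon\mathbb{C}\to\mathbb{C}$, the vector fields $f(x)V^x$, $f(y)V^y$, $f(z)V^z$ on $M$ are complete. *)

(* Defs.v *)
From Stdlib Require Import Reals.
From Coquelicot Require Import Coquelicot.

Local Open Scope C_scope.

Definition C3 : Type := (C * C * C)%type.
Definition px (p : C3) : C := fst (fst p).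
Definition py (p : C3) : C := snd (fst p).
Definition pz (p : C3) : C := snd p.

Definition two : C := RtoC 2.

Definition onM (A B Cc D E : C) (p : C3) : Prop :=
  let x := px p in let y := py p in let z := pz p in
  x * x + y * y + z * z + E * x * y * z - A * x - B * y - Cc * z - D = RtoC 0.

Definition Vx (A B Cc D E : C) (p : C3) : C3 :=
  let x := px p in let y := py p in let z := pz p in
  (RtoC 0, two * z + E * x * y - Cc, - (two * y + E * x * z - B)).
Definition Vy (A B Cc D E : C) (p : C3) : C3 :=
  let x := px p in let y := py p in let z := pz p in
  (- (two * z + E * x * y - Cc), RtoC 0, two * x + E * y * z - A).
Definition Vz (A B Cc D E : C) (p : C3) : C3 :=
  let x := px p in let y := py p in let z := pz p in
  (two * y + E * x * z - B, - (two * x + E * y * z - A), RtoC 0).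

Definition entire (f : C -> C) : Prop :=
  forall z : C, @ex_derive C_AbsRing C_NormedModule f z.

Definition integral_curve (V : C3 -> C3) (phi : C -> C3) : Prop :=
  forall t : C,
    @is_derive C_AbsRing C_NormedModule (fun s => px (phi s)) t (px (V (phi t))) /\
    @is_derive C_AbsRing C_NormedModule (fun s => py (phi s)) t (py (V (phi t))) /\
    @is_derive C_AbsRing C_NormedModule (fun s => pz (phi s)) t (pz (V (phi t))).

Definition complete_on (S : C3 -> Prop) (V : C3 -> C3) : Prop :=
  forall p : C3, S p ->
    exists phi : C -> C3, phi (RtoC 0) = p /\ (forall t : C, S (phi t)) /\
      integral_curve V phi.

Definition scale_field (g : C3 -> C) (V : C3 -> C3) (p : C3) : C3 :=
  let v := V p in (g p * px v, g p * py v, g p * pz v).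

(* Main.v *)
Require Import Defs.
From Stdlib Require Import Reals Lra Psatz.
From Coquelicot Require Import Coquelicot.

Module RealPart.

Open Scope R_scope.

Lemma exp_bound (a : R) : Rabs a <= 1/2 -> 0 <= exp a - 1 - a <= 2 * a^2.
Proof.
  intros Ha. apply Rabs_le_between in Ha.
  pose proof (exp_ineq1_le a). pose proof (exp_ineq1_le (-a)).
  assert (exp a * exp (-a) = 1).
  { rewrite <- exp_plus. replace (a + - a) with 0 by ring. apply exp_0. }
  pose proof (exp_pos a). split. lra.
  assert (exp a * (1 - a) <= 1).
  { assert (exp a * (1 + - a) <= exp a * exp (-a)) by (apply Rmult_le_compat_l; lra). lra. }
  assert ((1 + a + 2*a^2) * (1 - a) = 1 + a^2 * (1 - 2 * a)) by ring.
  assert (0 <= a^2 * (1 - 2*a)) by (apply Rmult_le_pos; [apply pow2_ge_0|lra]).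
  assert (exp a * (1 - a) <= (1 + a + 2*a^2) * (1 - a)) by lra.
  apply Rmult_le_reg_r in H6; lra.
Qed.

Lemma sin_bound0 (b : R) : 0 <= b <= 1/2 -> b - b^3/6 <= sin b <= b.
Proof.
  intros Hb. pose proof PI2_1.
  assert (Hs : sin_approx b (2*0+1) <= sin b <= sin_approx b (2*(0+1))) by (apply sin_bound; lra).
  destruct Hs as [H1 H2].
  unfold sin_approx, sin_term in *. simpl in H1, H2.
  assert (H3 : sin b <= b - b^3/6 + b^5/120) by (eapply Rle_trans; [exact H2| right; field]).
  assert (H4 : b - b^3/6 <= sin b) by (eapply Rle_trans; [| exact H1]; right; field).
  split; [lra|]. assert (0 <= b^3) by (apply pow_le; lra).
  assert (b^5 = b^3 * b^2) by ring. assert (b^3*b^2 <= b^3 * 1) by (apply Rmult_le_compat_l; nra). lra.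
Qed.

Lemma sin_b (b : R) : Rabs b <= 1/2 -> Rabs (sin b) <= Rabs b /\ Rabs (sin b - b) <= b^2.
Proof.
  intros Hb. destruct (Rle_dec 0 b).
  - rewrite Rabs_pos_eq in Hb by lra. pose proof (sin_bound0 b (conj r Hb)).
    assert (b^3 = b^2 * b) by ring. assert (0 <= b^2) by (apply pow2_ge_0).
    assert (b^2 * b <= b^2 * 1) by (apply Rmult_le_compat_l; lra).
    assert (b^2 = b*b) by ring. assert (b*b <= b*(1/2)) by (apply Rmult_le_compat_l; lra).
    rewrite (Rabs_pos_eq b) by lra.
    split; apply Rabs_le; lra.
  - apply Rnot_le_lt in n. rewrite Rabs_left in Hb by lra. assert (Hb' : 0 <= -b <= 1/2) by lra. pose proof (sin_bound0 (-b) Hb').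
    rewrite sin_neg in H.
    assert ((-b)^3 = b^2 * (-b)) by ring. assert (0 <= b^2) by (apply pow2_ge_0).
    assert (b^2 * (-b) <= b^2 * 1) by (apply Rmult_le_compat_l; lra).
    assert (b^2 = (-b)*(-b)) by ring. assert ((-b)*(-b) <= (-b)*(1/2)) by (apply Rmult_le_compat_l; lra).
    rewrite (Rabs_left b) by lra.
    split; apply Rabs_le; lra.
Qed.

Lemma cos_b (b : R) : Rabs b <= 1/2 -> Rabs (cos b - 1) <= b^2/2.
Proof.
  intros Hb. apply Rabs_le_between in Hb. pose proof PI2_1.
  assert (Hs : cos_approx b (2*0+1) <= cos b <= cos_approx b (2*(0+1))) by (apply cos_bound; lra).
  destruct Hs as [H1 H2].
  unfold cos_approx, cos_term in *. simpl in H1, H2.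
  assert (H3 : cos b <= 1 - b^2/2 + b^4/24) by (eapply Rle_trans; [exact H2| right; field]).
  assert (H4 : 1 - b^2/2 <= cos b) by (eapply Rle_trans; [| exact H1]; right; field).
  assert (0 <= b^2) by apply pow2_ge_0.
  assert (b^4 = b^2*b^2) by ring. assert (b^2 * b^2 <= b^2 * 1) by (apply Rmult_le_compat_l; nra).
  apply Rabs_le. split; lra.
Qed.

Open Scope R_scope.

Definition cexp (z : C) : C := (exp (fst z) * cos (snd z), exp (fst z) * sin (snd z)).

Lemma cexp_add (z w : C) : cexp (z + w)%C = (cexp z * cexp w)%C.
Proof.
  destruct z as [a b], w as [c d]. unfold cexp, Cplus, Cmult; simpl.
  rewrite exp_plus, cos_plus, sin_plus. f_equal; ring.
Qed.

Lemma cexp_0 : cexp 0%C = 1%C.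
Proof. unfold cexp, RtoC; simpl. rewrite exp_0, cos_0, sin_0. f_equal; ring. Qed.

Lemma Cmod_le_sum (a b : R) : Cmod (a, b) <= Rabs a + Rabs b.
Proof.
  unfold Cmod; simpl fst; simpl snd. pose proof (Rabs_pos a). pose proof (Rabs_pos b).
  apply Rsqr_incr_0_var; [|lra].
  rewrite Rsqr_sqrt by (pose proof (pow2_ge_0 a); pose proof (pow2_ge_0 b); lra).
  unfold Rsqr. rewrite <- (pow2_abs a), <- (pow2_abs b).
  assert (0 <= Rabs a * Rabs b) by (apply Rmult_le_pos; lra). nra.
Qed.

Lemma cexp_small (h : C) : Cmod h <= 1/2 ->
  Cmod (cexp h - 1 - h)%C <= 3 * (Cmod h)^2.
Proof.
  destruct h as [a b]. intros Hh.
  pose proof (re_le_Cmod (a,b)) as Ha.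
  simpl in Ha.
  assert (Hb : Rabs b <= Cmod (a,b)).
  { unfold Cmod; simpl. rewrite <- sqrt_Rsqr_abs. apply sqrt_le_1_alt. unfold Rsqr; nra. }
  assert (Ha2 : Rabs a <= 1/2) by lra. assert (Hb2 : Rabs b <= 1/2) by lra.
  rewrite Cmod2_alt; simpl.
  unfold cexp, Cminus, Cplus, Copp; simpl.
  eapply Rle_trans; [apply Cmod_le_sum|].
  destruct (exp_bound a Ha2) as [E1 E2].
  destruct (sin_b b Hb2) as [S1 S2].
  pose proof (cos_b b Hb2) as C1.
  replace (exp a * cos b + - (1) + - a) with ((exp a - 1 - a) * cos b + (1 + a) * (cos b - 1)) by ring.
  replace (exp a * sin b + - 0 + - b) with ((exp a - 1) * sin b + (sin b - b)) by ring.
  assert (R1 : Rabs ((exp a - 1 - a) * cos b + (1 + a) * (cos b - 1)) <= 2 * a^2 + b^2).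
  { eapply Rle_trans; [apply Rabs_triang|]. rewrite !Rabs_mult.
    pose proof (COS_bound b). assert (Rabs (cos b) <= 1) by (apply Rabs_le; lra).
    rewrite (Rabs_pos_eq (exp a - 1 - a)) by lra.
    assert (Rabs (1 + a) <= 3/2) by (apply Rabs_le; apply Rabs_le_between in Ha2; lra).
    pose proof (Rabs_pos (cos b)). pose proof (Rabs_pos (cos b - 1)). pose proof (Rabs_pos (1+a)).
    assert ((exp a - 1 - a) * Rabs (cos b) <= 2 * a^2 * 1) by (apply Rmult_le_compat; lra).
    assert (Rabs (1 + a) * Rabs (cos b - 1) <= 3/2 * (b^2/2)) by (apply Rmult_le_compat; lra).
    assert (0 <= b^2) by apply pow2_ge_0. lra. }
  assert (R2 : Rabs ((exp a - 1) * sin b + (sin b - b)) <= a^2 + 2 * b^2).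
  { eapply Rle_trans; [apply Rabs_triang|]. rewrite !Rabs_mult.
    assert (Rabs (exp a - 1) <= 2 * Rabs a).
    { apply Rabs_le. assert (a^2 <= Rabs a * (1/2)).
      { replace (a^2) with (Rabs a * Rabs a) by (rewrite <- Rabs_mult, Rabs_pos_eq; nra).
        apply Rmult_le_compat_l; [apply Rabs_pos|lra]. }
      pose proof (Rle_abs a). pose proof (Rle_abs (-a)). rewrite Rabs_Ropp in *. lra. }
    pose proof (Rabs_pos (exp a - 1)). pose proof (Rabs_pos (sin b)).
    assert (Rabs (exp a - 1) * Rabs (sin b) <= (2 * Rabs a) * Rabs b) by (apply Rmult_le_compat; lra).
    assert (2 * Rabs a * Rabs b <= a^2 + b^2).
    { replace (a^2) with (Rabs a * Rabs a) by (rewrite <- Rabs_mult, Rabs_pos_eq; nra).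
      replace (b^2) with (Rabs b * Rabs b) by (rewrite <- Rabs_mult, Rabs_pos_eq; nra).
      pose proof (pow2_ge_0 (Rabs a - Rabs b)). nra. }
    lra. }
  lra.
Qed.

Lemma is_derive_cexp (z : C) : @is_derive C_AbsRing C_NormedModule cexp z (cexp z).
Proof.
  split. { apply is_linear_scal_l. }
  intros x Hx. apply (@is_filter_lim_locally_unique C_AbsRing (AbsRing_NormedModule C_AbsRing)) in Hx. subst x.
  intros eps.
  set (K := Cmod (cexp z)). assert (HK : 0 <= K) by apply Cmod_ge_0.
  assert (Hd : 0 < Rmin (1/4) (eps / (6 * (K + 1)))).
  { apply Rmin_pos; [lra|]. apply Rdiv_lt_0_compat; [apply cond_pos|lra]. }
  exists (mkposreal _ Hd). intros y Hy.
  change (Cmod (y - z)%C < Rmin (1/4) (eps / (6 * (K + 1)))) in Hy.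
  change (norm ?u) with (Cmod u).
  change (minus y z) with (y - z)%C in *.
  set (h := (y - z)%C) in *.
  assert (Hy' : y = (z + h)%C).
  { unfold h. assert (Hr : forall a b : C, a = (b + (a - b))%C) by (intros; ring). apply Hr. }
  change (minus (minus (cexp y) (cexp z)) (scal h (cexp z))) with ((cexp y - cexp z) - h * cexp z)%C.
  rewrite Hy', cexp_add.
  replace (cexp z * cexp h - cexp z - h * cexp z)%C with (cexp z * (cexp h - 1 - h))%C by ring.
  rewrite Cmod_mult. fold K.
  pose proof (Rmin_l (1/4) (eps / (6 * (K + 1)))).
  pose proof (Rmin_r (1/4) (eps / (6 * (K + 1)))).
  set (d := Rmin (1/4) (eps / (6 * (K + 1)))) in *.
  pose proof (Cmod_ge_0 h).
  assert (Hh : Cmod h <= 2 * d).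
  { lra. }
  pose proof (cexp_small h ltac:(lra)) as Hc.
  assert (Cmod (cexp h - 1 - h) <= 3 * (2 * d) * Cmod h).
  { eapply Rle_trans; [exact Hc|].
    assert (Cmod h * Cmod h <= (2*d) * Cmod h) by (apply Rmult_le_compat_r; lra).
    replace (3 * Cmod h ^ 2) with (3 * (Cmod h * Cmod h)) by ring. lra. }
  assert (K * (6 * d) <= eps).
  { assert (6 * d <= eps / (K+1)).
    { unfold Rdiv in *. rewrite Rinv_mult in H0. lra. }
    assert (K * (6*d) <= K * (eps / (K+1))) by (apply Rmult_le_compat_l; lra).
    assert (K * (eps / (K+1)) <= eps).
    { unfold Rdiv. replace (K * (eps * / (K+1))) with (eps * (K / (K+1))) by (field; lra).
      pose proof (cond_pos eps).
      assert (K / (K+1) <= 1).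
      { apply (Rmult_le_reg_r (K+1)); [lra|]. unfold Rdiv. rewrite Rmult_assoc, Rinv_l by lra. lra. }
      replace (pos eps) with (eps * 1) at 2 by ring. apply Rmult_le_compat_l; lra. }
    lra. }
  pose proof (Cmod_ge_0 (cexp h - 1 - h)).
  assert (K * Cmod (cexp h - 1 - h) <= K * (3 * (2 * d) * Cmod h)) by (apply Rmult_le_compat_l; lra).
  assert (K * (3 * (2 * d) * Cmod h) <= eps * Cmod h).
  { replace (K * (3 * (2 * d) * Cmod h)) with (K * (6 * d) * Cmod h) by ring.
    apply Rmult_le_compat_r; lra. }
  lra.
Qed.

Lemma csqrt_ex (m : C) : exists l : C, (l * l)%C = m.
Proof.
  destruct m as [a b].
  set (r := sqrt (a^2 + b^2)).
  assert (Hr2 : (r * r = a^2 + b^2)%R) by (unfold r; apply sqrt_sqrt; nra).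
  assert (Hr0 : 0 <= r) by apply sqrt_pos.
  assert (Hra : Rabs a <= r).
  { unfold r. rewrite <- sqrt_Rsqr_abs. apply sqrt_le_1_alt. unfold Rsqr; nra. }
  apply Rabs_le_between in Hra.
  set (u := sqrt ((r + a) / 2)). set (w := sqrt ((r - a) / 2)).
  assert (Hu : (u * u = (r + a) / 2)%R) by (apply sqrt_sqrt; lra).
  assert (Hw : (w * w = (r - a) / 2)%R) by (apply sqrt_sqrt; lra).
  assert (Huw : (u * w)%R = Rabs b / 2).
  { unfold u, w. rewrite <- sqrt_mult by lra.
    replace ((r + a) / 2 * ((r - a) / 2))%R with (Rsqr (Rabs b / 2)).
    - apply sqrt_Rsqr. pose proof (Rabs_pos b). lra.
    - unfold Rsqr. replace ((Rabs b / 2 * (Rabs b / 2)))%R with ((Rabs b * Rabs b)/4)%R by field.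
      rewrite <- Rabs_mult, Rabs_pos_eq by nra. nra. }
  destruct (Rle_dec 0 b).
  - exists (u, w). unfold Cmult; simpl. rewrite Rabs_pos_eq in Huw by lra. f_equal; nra.
  - exists (u, - w)%R. unfold Cmult; simpl. rewrite Rabs_left in Huw by lra. f_equal; nra.
Qed.

End RealPart.
Import RealPart.

Module CPart.

Notation DC f t l := (@is_derive C_AbsRing (AbsRing_NormedModule C_AbsRing) f t l).

Lemma bridge f t l : @is_derive C_AbsRing (AbsRing_NormedModule C_AbsRing) f t l -> @is_derive C_AbsRing C_NormedModule f t l.
Proof. intros H. destruct H as [H1 H2]. split.
 - destruct H1 as [a b [c [d e]]]. split; [exact a| exact b|]. exists c. split; [exact d|]. exact e.
 - intros x Hx eps. exact (H2 x Hx eps).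
Qed.

Lemma bridge' f t l : @is_derive C_AbsRing C_NormedModule f t l -> @is_derive C_AbsRing (AbsRing_NormedModule C_AbsRing) f t l.
Proof. intros H. destruct H as [H1 H2]. split.
 - destruct H1 as [a b [c [d e]]]. split; [exact a| exact b|]. exists c. split; [exact d|]. exact e.
 - intros x Hx eps. exact (H2 x Hx eps).
Qed.

Local Open Scope C_scope.

Lemma D_val f t l l' : DC f t l -> l = l' -> DC f t l'.
Proof. intros H ->; exact H. Qed.

Lemma D_const (a t : C) : DC (fun _ => a) t (RtoC 0).
Proof. eapply D_val; [exact (@is_derive_const C_AbsRing (AbsRing_NormedModule C_AbsRing) a t)|]. reflexivity. Qed.

Lemma D_id (t : C) : DC (fun s => s) t (RtoC 1).
Proof. eapply D_val; [exact (@is_derive_id C_AbsRing t)|]. reflexivity. Qed.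

Lemma D_plus f g t a b : DC f t a -> DC g t b -> DC (fun s => (f s + g s)%C) t (a + b)%C.
Proof. intros Hf Hg. exact (@is_derive_plus C_AbsRing (AbsRing_NormedModule C_AbsRing) f g t a b Hf Hg). Qed.

Lemma D_mult f g t a b : DC f t a -> DC g t b -> DC (fun s => (f s * g s)%C) t (a * g t + f t * b)%C.
Proof.
  intros Hf Hg. exact (@is_derive_mult C_AbsRing f g t a b Hf Hg Cmult_comm).
Qed.

Lemma D_comp f g t a b : DC f (g t) a -> DC g t b -> DC (fun s => f (g s)) t (b * a)%C.
Proof.
  intros Hf Hg. exact (@is_derive_comp C_AbsRing (AbsRing_NormedModule C_AbsRing) f g t a b Hf Hg).
Qed.

Lemma D_exp_lin (l t : C) : DC (fun s => cexp (l * s)%C) t (l * cexp (l * t))%C.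
Proof.
  apply (D_comp cexp (fun s => l * s)). apply bridge', is_derive_cexp.
  eapply D_val. { apply D_mult. apply D_const. apply D_id. } simpl. ring.
Qed.


Ltac toC := match goal with |- ?a = ?b => change (@eq C a b) end; cbv beta.

Definition half : C := RtoC (/2).
Lemma half2 : half + half = RtoC 1.
Proof. unfold half, RtoC, Cplus; simpl. f_equal; field. Qed.
Lemma two_nz : RtoC 1 + RtoC 1 <> RtoC 0.
Proof. unfold RtoC, Cplus; simpl. intros H. injection H. lra. Qed.

Lemma ST_ex (mu : C) : exists S T : C -> C,
  S (RtoC 0) = RtoC 0 /\ T (RtoC 0) = RtoC 0 /\
  (forall t, DC S t (RtoC 1 + mu * T t)) /\ (forall t, DC T t (S t)) /\
  (forall t, S t * S t = (RtoC 1 + RtoC 1) * T t + mu * T t * T t).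
Proof.
  destruct (Ceq_dec mu (RtoC 0)) as [Hm | Hm].
  - subst mu. exists (fun t => t), (fun t => t * t * half).
    split; [reflexivity|]. split; [toC; ring|]. split; [|split].
    + intros t. eapply D_val; [apply D_id|]. toC; ring.
    + intros t. eapply D_val.
      { apply D_mult; [apply D_mult; apply D_id|apply D_const]. }
      toC. replace ((RtoC 1 * t + t * RtoC 1) * half + t * t * RtoC 0) with (t * (half + half)) by ring.
      rewrite half2. ring.
    + intros t. replace ((RtoC 1 + RtoC 1) * (t * t * half) + RtoC 0 * (t * t * half) * (t * t * half))
        with (t * t * (half + half)) by ring. rewrite half2. ring.
  - destruct (csqrt_ex mu) as [l Hl].
    assert (Hl0 : l <> RtoC 0).
    { intros E. apply Hm. rewrite <- Hl, E. ring. }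
    pose proof two_nz as H2.
    set (k1 := / ((RtoC 1 + RtoC 1) * l)). set (k2 := / ((RtoC 1 + RtoC 1) * mu)).
    exists (fun t => cexp (l * t) * k1 + cexp ((- l) * t) * (- k1)),
           (fun t => cexp (l * t) * k2 + cexp ((- l) * t) * k2 + (- (RtoC 1 + RtoC 1)) * k2).
    assert (Hp : forall t, cexp (l * t) * cexp ((- l) * t) = RtoC 1).
    { intros t. rewrite <- cexp_add. replace (l * t + - l * t) with (RtoC 0) by ring. apply cexp_0. }
    assert (H0 : cexp (l * RtoC 0) = RtoC 1).
    { replace (l * RtoC 0) with (RtoC 0) by ring. apply cexp_0. }
    assert (H0' : cexp (- l * RtoC 0) = RtoC 1).
    { replace (- l * RtoC 0) with (RtoC 0) by ring. apply cexp_0. }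
    split; [rewrite H0, H0'; ring|]. split; [rewrite H0, H0'; ring|].
    split; [|split].
    + intros t. eapply D_val.
      { apply D_plus; (apply D_mult; [apply D_exp_lin|apply D_const]). }
      pose proof (Hp t) as Ht.
      assert (Hnz : cexp (l * t) <> RtoC 0).
      { intros E. rewrite E in Ht. apply C1_nz. rewrite <- Ht. ring. }
      assert (Em : cexp (- l * t) = / cexp (l * t)).
      { rewrite <- (Cmult_1_l (/ cexp (l * t))), <- Ht. field. auto. }
      toC. rewrite Em. unfold k1, k2. rewrite <- Hl. field. auto.
    + intros t. eapply D_val.
      { apply D_plus; [apply D_plus|apply D_const]; (apply D_mult; [apply D_exp_lin|apply D_const]). }
      toC. unfold k1, k2. rewrite <- Hl. field. auto.
    + intros t.
      pose proof (Hp t) as Ht.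
      assert (Hnz : cexp (l * t) <> RtoC 0).
      { intros E. rewrite E in Ht. apply C1_nz. rewrite <- Ht. ring. }
      assert (Em : cexp (- l * t) = / cexp (l * t)).
      { rewrite <- (Cmult_1_l (/ cexp (l * t))), <- Ht. field. auto. }
      toC. rewrite Em. unfold k1, k2. rewrite <- Hl. field. auto.
Qed.
Local Open Scope C_scope.

Definition FF (A B Cc D E x y z : C) : C :=
  x * x + y * y + z * z + E * x * y * z - A * x - B * y - Cc * z - D.

Lemma idx (A B Cc D E x0 y0 z0 c s t : C) :
  let two := RtoC 1 + RtoC 1 in
  let a := E * x0 in
  let w1 := c * (two * z0 + E * x0 * y0 - Cc) in
  let w2 := c * (- (two * y0 + E * x0 * z0 - B)) in
  let m1 := c * (a * w1 + two * w2) in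
  let m2 := c * (- (two * w1) - a * w2) in
  let mu := c * c * (a * a - two * two) in
  FF A B Cc D E x0 (y0 + s * w1 + t * m1) (z0 + s * w2 + t * m2) - FF A B Cc D E x0 y0 z0
  = (s * s - two * t - mu * t * t) * (w1 * w1 + a * w1 * w2 + w2 * w2).
Proof. intros. subst two a w1 w2 m1 m2 mu. unfold FF. ring. Qed.

Lemma idy (A B Cc D E x0 y0 z0 c s t : C) :
  let two := RtoC 1 + RtoC 1 in
  let a := E * y0 in
  let w1 := c * (- (two * z0 + E * x0 * y0 - Cc)) in
  let w2 := c * (two * x0 + E * y0 * z0 - A) in
  let m1 := c * (- (a * w1) - two * w2) in
  let m2 := c * (two * w1 + a * w2) in
  let mu := c * c * (a * a - two * two) in
  FF A B Cc D E (x0 + s * w1 + t * m1) y0 (z0 + s * w2 + t * m2) - FF A B Cc D E x0 y0 z0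
  = (s * s - two * t - mu * t * t) * (w1 * w1 + a * w1 * w2 + w2 * w2).
Proof. intros. subst two a w1 w2 m1 m2 mu. unfold FF. ring. Qed.

Lemma idz (A B Cc D E x0 y0 z0 c s t : C) :
  let two := RtoC 1 + RtoC 1 in
  let a := E * z0 in
  let w1 := c * (two * y0 + E * x0 * z0 - B) in
  let w2 := c * (- (two * x0 + E * y0 * z0 - A)) in
  let m1 := c * (a * w1 + two * w2) in
  let m2 := c * (- (two * w1) - a * w2) in
  let mu := c * c * (a * a - two * two) in
  FF A B Cc D E (x0 + s * w1 + t * m1) (y0 + s * w2 + t * m2) z0 - FF A B Cc D E x0 y0 z0
  = (s * s - two * t - mu * t * t) * (w1 * w1 + a * w1 * w2 + w2 * w2).
Proof. intros. subst two a w1 w2 m1 m2 mu. unfold FF. ring. Qed.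
Local Open Scope C_scope.

Lemma two_eq : two = RtoC 1 + RtoC 1.
Proof. unfold two, RtoC, Cplus; simpl. f_equal; ring. Qed.

Lemma valC f t l l' : @is_derive C_AbsRing C_NormedModule f t l -> l = l' ->
  @is_derive C_AbsRing C_NormedModule f t l'.
Proof. intros H ->; exact H. Qed.

Lemma lin_der (S T : C -> C) mu
  (hS : forall t, DC S t (RtoC 1 + mu * T t)) (hT : forall t, DC T t (S t)) (al be ga t : C) :
  @is_derive C_AbsRing C_NormedModule (fun s => al + S s * be + T s * ga) t
    ((RtoC 1 + mu * T t) * be + S t * ga).
Proof.
  apply bridge. eapply D_val.
  { apply D_plus; [apply D_plus; [apply D_const| apply D_mult; [apply hS|apply D_const]]
                  | apply D_mult; [apply hT|apply D_const]]. }
  toC; ring.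
Qed.

Lemma const_der (a k t : C) :
  @is_derive C_AbsRing C_NormedModule (fun s => a) t (k * RtoC 0).
Proof. apply bridge. eapply D_val; [apply D_const|]. toC; ring. Qed.

Lemma onM_FF A B Cc D E p : onM A B Cc D E p <-> FF A B Cc D E (px p) (py p) (pz p) = RtoC 0.
Proof. unfold onM, FF. tauto. Qed.

Lemma caseX (A B Cc D E : C) (f : C -> C) :
  complete_on (onM A B Cc D E) (scale_field (fun p => f (px p)) (Vx A B Cc D E)).
Proof.
  intros p Hp. destruct p as [[x0 y0] z0].
  apply onM_FF in Hp. unfold px, py, pz in Hp; simpl in Hp.
  set (c := f x0).
  set (two' := RtoC 1 + RtoC 1).
  set (a := E * x0).
  set (w1 := c * (two' * z0 + E * x0 * y0 - Cc)).
  set (w2 := c * (- (two' * y0 + E * x0 * z0 - B))).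
  set (m1 := c * (a * w1 + two' * w2)).
  set (m2 := c * (- (two' * w1) - a * w2)).
  set (mu := c * c * (a * a - two' * two')).
  destruct (ST_ex mu) as (S & T & S0 & T0 & dS & dT & rel).
  exists (fun t => (x0, y0 + S t * w1 + T t * m1, z0 + S t * w2 + T t * m2)).
  split; [|split].
  - rewrite S0, T0. f_equal; [f_equal|]; ring.
  - intros t. apply onM_FF. unfold px, py, pz; simpl.
    pose proof (idx A B Cc D E x0 y0 z0 c (S t) (T t)) as I. simpl in I.
    fold two' a w1 w2 m1 m2 mu in I.
    assert (Z : S t * S t - two' * T t - mu * T t * T t = RtoC 0) by (rewrite rel; unfold two'; ring).
    rewrite Z, Hp in I.
    match goal with |- ?L = _ => transitivity (L - RtoC 0) end.
    + ring.
    + unfold m1, m2, w1, w2, mu, a in *. rewrite I. ring.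
  - intros t. unfold px, py, pz, scale_field, Vx; simpl. split; [|split].
    + apply const_der.
    + eapply valC; [apply (lin_der S T mu dS dT)|].
      toC. unfold px, py, pz; simpl. rewrite two_eq. fold two'. unfold m1, m2, mu, w1, w2, a, c, two'. ring.
    + eapply valC; [apply (lin_der S T mu dS dT)|].
      toC. unfold px, py, pz; simpl. rewrite two_eq. fold two'. unfold m1, m2, mu, w1, w2, a, c, two'. ring.
Qed.

Lemma caseY (A B Cc D E : C) (f : C -> C) :
  complete_on (onM A B Cc D E) (scale_field (fun p => f (py p)) (Vy A B Cc D E)).
Proof.
  intros p Hp. destruct p as [[x0 y0] z0].
  apply onM_FF in Hp. unfold px, py, pz in Hp; simpl in Hp.
  set (c := f y0).
  set (two' := RtoC 1 + RtoC 1).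
  set (a := E * y0).
  set (w1 := c * (- (two' * z0 + E * x0 * y0 - Cc))).
  set (w2 := c * (two' * x0 + E * y0 * z0 - A)).
  set (m1 := c * (- (a * w1) - two' * w2)).
  set (m2 := c * (two' * w1 + a * w2)).
  set (mu := c * c * (a * a - two' * two')).
  destruct (ST_ex mu) as (S & T & S0 & T0 & dS & dT & rel).
  exists (fun t => (x0 + S t * w1 + T t * m1, y0, z0 + S t * w2 + T t * m2)).
  split; [|split].
  - rewrite S0, T0. f_equal; [f_equal|]; ring.
  - intros t. apply onM_FF. unfold px, py, pz; simpl.
    pose proof (idy A B Cc D E x0 y0 z0 c (S t) (T t)) as I. simpl in I.
    fold two' a w1 w2 m1 m2 mu in I.
    assert (Z : S t * S t - two' * T t - mu * T t * T t = RtoC 0) by (rewrite rel; unfold two'; ring).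
    rewrite Z, Hp in I.
    match goal with |- ?L = _ => transitivity (L - RtoC 0) end.
    + ring.
    + unfold m1, m2, w1, w2, mu, a in *. rewrite I. ring.
  - intros t. unfold px, py, pz, scale_field, Vy; simpl. split; [|split].
    + eapply valC; [apply (lin_der S T mu dS dT)|].
      toC. unfold px, py, pz; simpl. rewrite two_eq. fold two'. unfold m1, m2, mu, w1, w2, a, c, two'. ring.
    + apply const_der.
    + eapply valC; [apply (lin_der S T mu dS dT)|].
      toC. unfold px, py, pz; simpl. rewrite two_eq. fold two'. unfold m1, m2, mu, w1, w2, a, c, two'. ring.
Qed.

Lemma caseZ (A B Cc D E : C) (f : C -> C) :
  complete_on (onM A B Cc D E) (scale_field (fun p => f (pz p)) (Vz A B Cc D E)).
Proof.
  intros p Hp. destruct p as [[x0 y0] z0].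
  apply onM_FF in Hp. unfold px, py, pz in Hp; simpl in Hp.
  set (c := f z0).
  set (two' := RtoC 1 + RtoC 1).
  set (a := E * z0).
  set (w1 := c * (two' * y0 + E * x0 * z0 - B)).
  set (w2 := c * (- (two' * x0 + E * y0 * z0 - A))).
  set (m1 := c * (a * w1 + two' * w2)).
  set (m2 := c * (- (two' * w1) - a * w2)).
  set (mu := c * c * (a * a - two' * two')).
  destruct (ST_ex mu) as (S & T & S0 & T0 & dS & dT & rel).
  exists (fun t => (x0 + S t * w1 + T t * m1, y0 + S t * w2 + T t * m2, z0)).
  split; [|split].
  - rewrite S0, T0. f_equal. f_equal; ring.
  - intros t. apply onM_FF. unfold px, py, pz; simpl.
    pose proof (idz A B Cc D E x0 y0 z0 c (S t) (T t)) as I. simpl in I.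
    fold two' a w1 w2 m1 m2 mu in I.
    assert (Z : S t * S t - two' * T t - mu * T t * T t = RtoC 0) by (rewrite rel; unfold two'; ring).
    rewrite Z, Hp in I.
    match goal with |- ?L = _ => transitivity (L - RtoC 0) end.
    + ring.
    + unfold m1, m2, w1, w2, mu, a in *. rewrite I. ring.
  - intros t. unfold px, py, pz, scale_field, Vz; simpl. split; [|split].
    + eapply valC; [apply (lin_der S T mu dS dT)|].
      toC. unfold px, py, pz; simpl. rewrite two_eq. fold two'. unfold m1, m2, mu, w1, w2, a, c, two'. ring.
    + eapply valC; [apply (lin_der S T mu dS dT)|].
      toC. unfold px, py, pz; simpl. rewrite two_eq. fold two'. unfold m1, m2, mu, w1, w2, a, c, two'. ring.
    + apply const_der.
Qed.

End CPart.
Import CPart.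

Theorem corollary2p3 (A B Cc D E : C) (hE : E <> RtoC 0) (f : C -> C)
  (hf : entire f) :
  complete_on (onM A B Cc D E) (scale_field (fun p => f (px p)) (Vx A B Cc D E)) /\
  complete_on (onM A B Cc D E) (scale_field (fun p => f (py p)) (Vy A B Cc D E)) /\
  complete_on (onM A B Cc D E) (scale_field (fun p => f (pz p)) (Vz A B Cc D E)).
Proof.
  split; [apply caseX|split; [apply caseY|apply caseZ]].
Qed.
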